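(* Let $\mathbb{H}$ be a quasiconcave classical entropy. Then its maximal extension is additive on classical channels: for classical channels $\mathcal{N}$ from $X$ to $Y$ and $\mathcal{M}$ from $X'$ to $Y'$, $\overline{\mathbb{H}}(YY'|XX')_{\mathcal{N}\otimes\mathcal{M}}=\overline{\mathbb{H}}(Y|X)_{\mathcal{N}}+\overline{\mathbb{H}}(Y'|X')_{\mathcal{M}}$.
   Context: A classical entropy is a function $\mathbb{H}$ on $\bigcup_{n}\mathrm{Prob}(n)$ that is Schur-concave ($\mathbf{p}\succ\mathbf{q}\Rightarrow\mathbb{H}(\mathbf{p})\le\mathbb{H}(\mathbf{q})$, comparing vectors of different lengths after zero-padding) and additive under tensor products; quasiconcave means $\mathbb{H}(\sum_i\lambda_i\mathbf{p}_i)\ge\min_i\mathbb{H}(\mathbf{p}_i)$. Classical channels are column-stochastic matrices; $\mathcal{N}\otimes\mathcal{M}$ has columns $\mathcal{N}(\mathbf{e}_x)\otimes\mathcal{M}(\mathbf{e}_{x'})$. Classical channel majorization (same output): $\mathcal{N}\succ\mathcal{M}$ iff $\mathcal{M}=\mathcal{D}^{YZ\to Y}\circ(\mathcal{N}\otimes\mathrm{id}^Z)\circ\mathcal{S}^{X'\to XZ}$ for classical channels $\mathcal{S},\mathcal{D}$ with $\mathcal{D}(\cdot\otimes\mathbf{e}_z)$ doubly stochastic for all $z$; different output sizes are compared after zero-padding. Probability vectors are channels with trivial input. The maximal extension is $\overline{\mathbb{H}}(Y|X)_{\mathcal{N}}:=\inf\{\mathbb{H}(\mathbf{q}):\mathcal{N}\succ\mathbf{q}\}$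 over probability vectors of arbitrary finite length. *)

(* Defs.v *)
From HB Require Import structures.
From mathcomp Require Import all_boot all_order all_algebra.
From mathcomp Require Import mxtens.
From mathcomp Require Import classical_sets reals.

Set Implicit Arguments.
Unset Strict Implicit.
Unset Printing Implicit Defensive.

Import Order.TTheory GRing.Theory Num.Theory.
Local Open Scope ring_scope.
Local Open Scope classical_set_scope.

Section Defs.
Variable R : realType.

(* A classical channel from X (|X| = nx) to Y (|Y| = ny): a column-stochastic
   matrix N with N y x = probability of output y on input x. *)
Definition channel (ny nx : nat) (N : 'M[R]_(ny, nx)) : Prop :=
  (forall y x, 0 <= N y x) /\ (forall x, \sum_(y < ny) N y x = 1).

Definition prob (n : nat) (p : 'cV[R]_n) : Prop := channel p.

Definition doubly_stochastic (n : nat) (D : 'M[R]_n) : Prop :=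
  (forall i j, 0 <= D i j) /\ (forall j, \sum_(i < n) D i j = 1)
  /\ (forall i, \sum_(j < n) D i j = 1).

(* Tensor product of channels / vectors: (N ⊗ M) (y,y') (x,x') = N y x * M y' x',
   pairs being encoded by mxtens_index. *)
Definition chan_tens (ny nx ny' nx' : nat) (N : 'M[R]_(ny, nx))
  (M : 'M[R]_(ny', nx')) : 'M[R]_(ny * ny', nx * nx') := tensmx N M.

Definition pad_out (ny nx : nat) (k : nat) (N : 'M[R]_(ny, nx)) : 'M[R]_(k, nx) :=
  \matrix_(i < k, j < nx)
    match @insub nat (fun t => t < ny)%N _ (val i) with
    | Some i' => N i' j
    | None => 0
    end.

(* Classical channel majorization N ≻ M (outputs zero-padded to a common size
   k = max(|Y|,|Y'|)):  M = D^{YZ->Y} ∘ (N ⊗ id^Z) ∘ S^{X'->XZ}, with S, D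
   classical channels and D(· ⊗ e_z) doubly stochastic for every z. *)
Definition chan_majorizes (ny nx ny' nx' : nat) (N : 'M[R]_(ny, nx))
  (M : 'M[R]_(ny', nx')) : Prop :=
  let k := maxn ny ny' in
  exists (nz : nat) (S : 'M[R]_(nx * nz, nx')) (D : 'M[R]_(k, k * nz)),
    [/\ channel S, channel D,
        (forall z : 'I_nz,
           doubly_stochastic (\matrix_(i < k, j < k) D i (mxtens_index (j, z))))
      & pad_out k M = D *m (tensmx (pad_out k N) (1%:M : 'M[R]_nz)) *m S].

Definition majorizes (m n : nat) (p : 'cV[R]_m) (q : 'cV[R]_n) : Prop :=
  chan_majorizes p q.

Definition entropy_fun := forall n : nat, 'cV[R]_n -> R.

Definition schur_concave (H : entropy_fun) : Prop :=
  forall m n (p : 'cV[R]_m) (q : 'cV[R]_n), prob p -> prob q ->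
    majorizes p q -> H m p <= H n q.

Definition additive (H : entropy_fun) : Prop :=
  forall m n (p : 'cV[R]_m) (q : 'cV[R]_n), prob p -> prob q ->
    H (m * n)%N (chan_tens p q) = H m p + H n q.

Definition classical_entropy (H : entropy_fun) : Prop :=
  schur_concave H /\ additive H.

Definition quasiconcave (H : entropy_fun) : Prop :=
  forall n k (lam : 'cV[R]_k.+1) (ps : 'I_k.+1 -> 'cV[R]_n),
    prob lam -> (forall i, prob (ps i)) ->
    \big[Num.min/H n (ps ord0)]_(i < k.+1) H n (ps i)
      <= H n (\sum_(i < k.+1) lam i 0 *: ps i).

Definition max_ext (H : entropy_fun) (ny nx : nat) (N : 'M[R]_(ny, nx)) : R :=
  inf [set r : R | exists (m : nat) (q : 'cV[R]_m),
                     [/\ prob q, chan_majorizes N q & r = H m q]].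

End Defs.

(* Main.v *)
Require Import Defs.
From HB Require Import structures.
From mathcomp Require Import all_boot all_order all_algebra.
From mathcomp Require Import mxtens.
From mathcomp Require Import classical_sets reals.
Import Order.TTheory GRing.Theory Num.Theory.
Local Open Scope ring_scope.

Lemma sum_tens (R : realType) m n (F : 'I_(m*n) -> R) :
  \sum_(k < m * n) F k = \sum_(i < m) \sum_(j < n) F (mxtens_index (i, j)).
Proof.
rewrite pair_big /= (reindex (@mxtens_index m n)) /=.
  by apply: eq_bigr => -[i j].
by exists (@mxtens_unindex m n) => x _; [rewrite mxtens_indexK | rewrite mxtens_unindexK].
Qed.

Lemma pad_id (R : realType) n c (A : 'M[R]_(n, c)) : pad_out n A = A.
Proof. by apply/matrixP => i j; rewrite mxE valK. Qed.

Lemma pad_ge0 (R : realType) a c K (A : 'M[R]_(a, c)) :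
  (forall i j, 0 <= A i j) -> forall i j, 0 <= pad_out K A i j.
Proof. by move=> H0 i j; rewrite mxE; case: insub. Qed.

Lemma pad_sum (R : realType) a c K (A : 'M[R]_(a, c)) x : (a <= K)%N ->
  \sum_(i < K) pad_out K A i x = \sum_(i < a) A i x.
Proof.
move=> aK; move: (K - a)%N (subnKC aK) => t e; subst K.
rewrite big_split_ord /= [X in _ + X]big1 ?addr0.
  apply: eq_bigr => i _; rewrite mxE; case: insubP => [u _ Eu|].
    by congr (A _ x); apply: val_inj.
  by rewrite /= ltn_ord.
move=> i _; rewrite mxE; case: insubP => [u Hu Eu|//].
by move: Hu; rewrite /= ltnNge leq_addr.
Qed.

Lemma pad_col (R : realType) a c K (A : 'M[R]_(a, c)) x :
  col x (pad_out K A) = pad_out K (col x A).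
Proof.
apply/matrixP => i j; rewrite !mxE; case: insub => // u.
by rewrite mxE.
Qed.

Lemma bigmin_ex (R : realType) n (F : 'I_n.+1 -> R) :
  exists i, F i <= \big[Num.min/F ord0]_(i < n.+1) F i.
Proof.
apply: (big_ind (fun x => exists i, F i <= x)).
- by exists ord0.
- move=> x y [i Hi] [j Hj]; case/orP: (le_total x y) => [xy|yx].
    by exists i; rewrite le_min Hi (le_trans Hi xy).
  by exists j; rewrite le_min Hj (le_trans Hj yx).
- by move=> i _; exists i.
Qed.

Lemma qc_ex (R : realType) (H : entropy_fun R) : quasiconcave H ->
  forall n k (lam : 'cV[R]_k) (ps : 'I_k -> 'cV[R]_n),
  prob lam -> (forall i, prob (ps i)) ->
  exists i, H n (ps i) <= H n (\sum_(i < k) lam i 0 *: ps i).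
Proof.
move=> Hqc n [|k] lam ps Hl Hp.
  by case: Hl => _ /(_ ord0); rewrite big_ord0 => /eqP; rewrite eq_sym oner_eq0.
have [i Hi] := @bigmin_ex _ _ (fun i => H n (ps i)).
by exists i; apply: le_trans Hi (Hqc _ _ _ _ Hl Hp).
Qed.

Lemma inf_min (R : realType) (E : set R) r :
  E r -> (forall e, E e -> r <= e) -> inf E = r.
Proof.
move=> Er lb; apply/eqP; rewrite eq_le; apply/andP; split.
  by apply: ge_inf => //; exists r.
by apply: lb_le_inf => //; exists r.
Qed.

Lemma chanmaj1 (R : realType) a c b d K (eK : maxn a b = K)
  (N : 'M[R]_(a, c)) (M : 'M[R]_(b, d)) (D0 : 'M[R]_K) (S0 : 'M[R]_(c, d)) :
  doubly_stochastic D0 -> channel S0 ->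
  pad_out K M = D0 *m pad_out K N *m S0 -> chan_majorizes N M.
Proof.
subst K => -[D0ge [D0c D0r]] [S0ge S0c] eq.
rewrite /chan_majorizes /=.
set pN := pad_out _ N.
exists 1%N, (\matrix_(l, j) S0 (mxtens_unindex l).1 j),
  (\matrix_(i, l) D0 i (mxtens_unindex l).1).
split.
- split => [l j|j]; first by rewrite mxE.
  rewrite sum_tens -[RHS](S0c j); apply: eq_bigr => i _.
  by rewrite big_ord1 mxE mxtens_indexK.
- split => [i l|l]; first by rewrite mxE.
  rewrite -[RHS](D0c (mxtens_unindex l).1); apply: eq_bigr => i _.
  by rewrite mxE.
- move=> z.
  have -> : (\matrix_(i, j) (\matrix_(i0, l) D0 i0 (mxtens_unindex l).1) i
                (mxtens_index (j, z))) = D0.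
    by apply/matrixP => i j; rewrite !mxE mxtens_indexK.
  by split.
- have E1 : (\matrix_(i, l) D0 i (mxtens_unindex l).1) *m tensmx pN (1%:M : 'M[R]_1)
     = \matrix_(i, l) (D0 *m pN) i (mxtens_unindex l).1.
    apply/matrixP => i l; rewrite !mxE sum_tens; apply: eq_bigr => m _.
    rewrite big_ord1 !mxE mxtens_indexK /=.
    by rewrite [X in (ord0 == X)]ord1 eqxx mulr1.
  rewrite E1 eq; apply/matrixP => i j; rewrite [LHS]mxE [RHS]mxE sum_tens.
  apply: eq_bigr => m _; rewrite big_ord1 !mxE mxtens_indexK /=.
  by [].
Qed.

Lemma sum_delta (R : realType) n (x : 'I_n) :
  \sum_(i < n) (1%:M : 'M[R]_n) i x = 1.
Proof.
rewrite (bigD1 x) //= big1 ?addr0; first by rewrite mxE eqxx.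
by move=> i /negbTE ni; rewrite mxE ni.
Qed.

Lemma sum_delta_r (R : realType) n (x : 'I_n) :
  \sum_(i < n) (1%:M : 'M[R]_n) x i = 1.
Proof.
rewrite (bigD1 x) //= big1 ?addr0; first by rewrite mxE eqxx.
by move=> i; rewrite eq_sym => /negbTE ni; rewrite mxE ni.
Qed.

Lemma ds1 (R : realType) n : doubly_stochastic (1%:M : 'M[R]_n).
Proof.
split; first by move=> i j; rewrite mxE ler0n.
by split => j; [apply: sum_delta | apply: sum_delta_r].
Qed.

Lemma chan_col1 (R : realType) n (x : 'I_n) : channel (col x (1%:M : 'M[R]_n)).
Proof.
split; first by move=> i j; rewrite !mxE ler0n.
by move=> j; apply: etrans (@sum_delta R n x); apply: eq_bigr => i _; rewrite mxE.
Qed.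

Lemma chan1 (R : realType) : channel (1%:M : 'M[R]_1).
Proof.
split; first by move=> i j; rewrite mxE ler0n.
by move=> j; rewrite big_ord1 mxE !ord1.
Qed.

Lemma majle (R : realType) a b (p : 'cV[R]_a) (q : 'cV[R]_b) (D0 : 'M[R]_b) :
  (a <= b)%N -> doubly_stochastic D0 -> q = D0 *m pad_out b p -> majorizes p q.
Proof.
move=> ab ds e.
apply: (@chanmaj1 R a 1 b 1 b _ p q D0 1%:M ds) => //.
- exact/maxn_idPr.
- exact: chan1.
by rewrite pad_id mulmx1.
Qed.

Lemma majge (R : realType) a b (p : 'cV[R]_a) (q : 'cV[R]_b) (D0 : 'M[R]_a) :
  (b <= a)%N -> doubly_stochastic D0 -> pad_out a q = D0 *m p -> majorizes p q.
Proof.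
move=> ba ds e.
apply: (@chanmaj1 R a 1 b 1 a _ p q D0 1%:M ds) => //.
- exact/maxn_idPl.
- exact: chan1.
by rewrite pad_id mulmx1.
Qed.

Lemma member (R : realType) ny nx (N : 'M[R]_(ny, nx)) x :
  chan_majorizes N (col x N).
Proof.
refine (@chanmaj1 R ny nx ny 1 (maxn ny ny) erefl N (col x N) 1%:M
          (col x 1%:M) (ds1 _ _) (@chan_col1 _ _ x) _).
by rewrite mul1mx (colE x 1%:M) mul1mx -colE pad_col.
Qed.

Lemma prob_col (R : realType) ny nx (N : 'M[R]_(ny, nx)) x :
  channel N -> prob (col x N).
Proof.
case=> Nge Nc; split; first by move=> i j; rewrite mxE.
by move=> j; rewrite -(Nc x); apply: eq_bigr => i _; rewrite mxE.
Qed.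

Lemma prob_pad (R : realType) m k (q : 'cV[R]_m) : (m <= k)%N -> prob q ->
  prob (pad_out k q).
Proof.
move=> mk [qge qs]; split; first exact: pad_ge0.
by move=> j; rewrite pad_sum.
Qed.

Lemma lb (R : realType) (H : entropy_fun R) : schur_concave H -> quasiconcave H ->
  forall ny nx (N : 'M[R]_(ny, nx)) m (q : 'cV[R]_m),
  channel N -> prob q -> chan_majorizes N q ->
  exists x, H ny (col x N) <= H m q.
Proof.
move=> Hs Hqc ny nx N m q chN pq; rewrite /chan_majorizes /=.
move=> -[nz [S [D [chS chD dsD eq]]]].
move: (maxn ny m) (leq_maxl ny m) (leq_maxr ny m) D dsD chD eq
  => k nyk mk D dsD chD eq.
set pN := pad_out k N.
pose Dz z : 'M[R]_k := \matrix_(i, j) D i (mxtens_index (j, z)).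
pose v (l : 'I_(nx * nz)) := Dz (mxtens_unindex l).2 *m col (mxtens_unindex l).1 pN.
have Eq : pad_out k q = \sum_l S l 0 *: v l.
  apply/matrixP => i j; rewrite eq [LHS]mxE summxE (ord1 j).
  apply: eq_bigr => l _; rewrite [RHS]mxE [LHS]mulrC; congr (_ * _).
  case: (mxtens_indexP l) => x z; rewrite /v mxtens_indexK /=.
  rewrite !mxE sum_tens; apply: eq_bigr => y _.
  rewrite (bigD1 z) //= big1 => [|w /negbTE wz].
    by rewrite tensmxE !mxE eqxx mulr1 addr0.
  by rewrite tensmxE [1%:M w z]mxE wz mulr0 mulr0.
have pv : forall l, prob (v l).
  move=> l; have [Dge [Dc Dr]] := dsD (mxtens_unindex l).2.
  have pNge := @pad_ge0 R ny nx k N (proj1 chN).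
  split.
    move=> i j; rewrite mxE; apply: sumr_ge0 => y _.
    by apply: mulr_ge0; [exact: Dge | rewrite mxE; exact: pNge].
  move=> j; rewrite (ord1 j).
  under eq_bigr do rewrite mxE.
  rewrite exchange_big /=.
  rewrite -[RHS](proj2 chN (mxtens_unindex l).1) -(@pad_sum R ny nx k N _ nyk).
  apply: eq_bigr => y _; rewrite -mulr_suml (Dc y) mul1r mxE //.
have [l Hl] := @qc_ex R H Hqc _ _ S v chS pv.
rewrite -Eq in Hl.
exists (mxtens_unindex l).1.
apply: (@le_trans _ _ (H k (v l))).
  apply: Hs; [exact: prob_col | exact: pv |].
  apply: (@majle R _ _ _ _ _ nyk (dsD (mxtens_unindex l).2)).
  by rewrite /v -pad_col.
apply: le_trans Hl _; apply: Hs; [exact: prob_pad | exact: pq |].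
by apply: (@majge R _ _ _ _ _ mk (ds1 _ _)); rewrite mul1mx.
Qed.

Lemma argmin_ex (R : realType) n (F : 'I_n -> R) : (0 < n)%N ->
  exists x0, forall x, F x0 <= F x.
Proof.
case: n F => [//|n] F _.
have [i Hi] := @bigmin_ex R n F.
exists i => x; apply: le_trans Hi _.
by rewrite (bigD1 x) //= ge_min lexx.
Qed.

Lemma channel_tens (R : realType) ny nx ny' nx' (N : 'M[R]_(ny, nx))
  (M : 'M[R]_(ny', nx')) : channel N -> channel M -> channel (chan_tens N M).
Proof.
move=> [Nge Nc] [Mge Mc]; split.
  by move=> i j; rewrite mxE mulr_ge0.
move=> j; rewrite sum_tens.
under eq_bigr do under eq_bigr do rewrite mxE mxtens_indexK /=.
under eq_bigr do rewrite -mulr_sumr Mc mulr1.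
by rewrite Nc.
Qed.

Lemma col_tens (R : realType) ny nx ny' nx' (N : 'M[R]_(ny, nx))
  (M : 'M[R]_(ny', nx')) x x' :
  col (mxtens_index (x, x')) (chan_tens N M) = chan_tens (col x N) (col x' M).
Proof.
apply/matrixP => i j; rewrite !mxE mxtens_indexK /=.
by [].
Qed.

Theorem mainTheorem16 (R : realType) (H : entropy_fun R) :
  classical_entropy H -> quasiconcave H ->
  forall (nx ny nx' ny' : nat) (N : 'M[R]_(ny, nx)) (M : 'M[R]_(ny', nx')),
    (0 < nx)%N -> (0 < nx')%N -> channel N -> channel M ->
    max_ext H (chan_tens N M) = max_ext H N + max_ext H M.
Proof.
move=> [Hs Hadd] Hqc nx ny nx' ny' N M nx0 nx'0 chN chM.
have [x0 Hx0] := @argmin_ex R _ (fun x => H ny (col x N)) nx0.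
have [x1 Hx1] := @argmin_ex R _ (fun x => H ny' (col x M)) nx'0.
have EN : max_ext H N = H ny (col x0 N).
  apply: inf_min; first by exists ny, (col x0 N); split => //;
    [exact: prob_col | exact: member].
  move=> e [m [q [pq mq ->]]].
  have [x Hx] := @lb R H Hs Hqc _ _ _ _ _ chN pq mq.
  exact: le_trans (Hx0 x) Hx.
have EM : max_ext H M = H ny' (col x1 M).
  apply: inf_min; first by exists ny', (col x1 M); split => //;
    [exact: prob_col | exact: member].
  move=> e [m [q [pq mq ->]]].
  have [x Hx] := @lb R H Hs Hqc _ _ _ _ _ chM pq mq.
  exact: le_trans (Hx1 x) Hx.
have chNM := @channel_tens R _ _ _ _ _ _ chN chM.
rewrite EN EM; apply: inf_min.
  exists (ny * ny')%N, (col (mxtens_index (x0, x1)) (chan_tens N M)).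
  split; [exact: prob_col | exact: member |].
  by rewrite col_tens Hadd //; exact: prob_col.
move=> e [m [q [pq mq ->]]].
have [l Hl] := @lb R H Hs Hqc _ _ _ _ _ chNM pq mq.
move: Hl; case: (mxtens_indexP l) => x x'.
rewrite col_tens Hadd; [move=> Hl | exact: prob_col | exact: prob_col].
by apply: le_trans Hl; apply: lerD.
Qed.
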